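(* Let $G$ be a connected finite simple graph with maximum degree $\Delta$. Then there exists an edge $e$ of $G$ with $|F(e)|=\Delta^2-1$ if and only if $G\in\mathcal{G}_\Delta$.
   Context: $N(w)$ is the open neighborhood of a vertex $w$. Two distinct edges $e,f$ are $1$-neighbors if they share an endvertex, and $2$-neighbors if they share no endvertex but some edge of $G$ shares an endvertex with each of them. $N(e)$ is the set of $1$-neighbors of $e$. For a $2$-neighbor $f=xy$ of $e=uv$, let $c(e,f)$ be the number of edges of $G$ joining a vertex of $\{u,v\}$ to a vertex of $\{x,y\}$. The $2$-neighbor $f$ is of Type 6 (relative to $e$) if $c(e,f)=1$; $T_6(e)$ is the set of such $f$. $F(e)=N(e)\cup(N^2(e)\setminus T_6(e))$, where $N^2(e)$ is the set of all $2$-neighbors of $e$; i.e. $F(e)$ consists of the $1$-neighbors of $e$ together with those $2$-neighbors $f$ of $e$ that are joined to $e$ by at least two edges. For a positive integer $p$, $\mathcal{G}_p$ is the family of $p$-regular graphs on $2p$ vertices containing an edge $uv$ with $N(u)\cup N(v)=V(G)$. *)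

(* Defs.v *)
(* A finite simple graph is a symmetric irreflexive relation
   g : rel T on a finType T; edges are 2-element vertex sets {u,v} with g u v. *)
From mathcomp Require Import all_boot.
Set Implicit Arguments. Unset Strict Implicit. Unset Printing Implicit Defensive.

Section Graph.
Variables (T : finType) (g : rel T).

Definition edges : {set {set T}} :=
  [set E : {set T} | [exists u, exists v, g u v && (E == [set u; v])]].

Definition nbhd (w : T) : {set T} := [set x | g w x].

Definition deg (w : T) : nat := #|nbhd w|.

Definition maxdeg : nat := \max_(w : T) deg w.

Definition meet (E F : {set T}) : bool := E :&: F != set0.

Definition N1 (E : {set T}) : {set {set T}} :=
  [set F in edges | (F != E) && meet E F].

Definition N2 (E : {set T}) : {set {set T}} :=
  [set F in edges | [&& F != E, ~~ meet E F &
     [exists H in edges, meet H E && meet H F]]].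

(* c(e,f): number of edges joining a vertex of e to a vertex of f
   (for disjoint e, f these are exactly the edges meeting both). *)
Definition cnt (E F : {set T}) : nat :=
  #|[set H in edges | [exists x in E, exists y in F, H == [set x; y]]]|.

Definition T6 (E : {set T}) : {set {set T}} :=
  [set F in N2 E | cnt E F == 1].

Definition Fset (E : {set T}) : {set {set T}} := N1 E :|: (N2 E :\: T6 E).

Definition regular (p : nat) : Prop := forall w, deg w = p.

Definition in_Gp (p : nat) : Prop :=
  [/\ 0 < p, regular p, #|T| = 2 * p &
     exists u v, g u v /\ nbhd u :|: nbhd v = [set: T]].

End Graph.

(* Main.v *)
Require Import Defs.
From mathcomp Require Import all_boot zify.
Set Implicit Arguments. Unset Strict Implicit. Unset Printing Implicit Defensive.

Section Gen.
Variable T : finType.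

Lemma card_sumb (V : finType) (A : {set V}) (P : pred V) :
  #|[set z in A | P z]| = \sum_(z in A) P z.
Proof.
rewrite -sum1_card big_mkcond /= [RHS]big_mkcond /=; apply: eq_bigr => z _.
by rewrite !inE; case: (z \in A); case: (P z).
Qed.

Lemma dcount (U : finType) (A : {set T}) (B : {set U}) (R : T -> U -> bool) :
  \sum_(x in A) #|[set y in B | R x y]| = \sum_(y in B) #|[set x in A | R x y]|.
Proof.
under eq_bigr do rewrite card_sumb.
rewrite exchange_big /=; apply: eq_bigr => y _.
by rewrite card_sumb.
Qed.

Lemma sum_eq_le (A : {set T}) (F G : T -> nat) :
  (forall i, i \in A -> F i <= G i) -> \sum_(i in A) G i <= \sum_(i in A) F i ->
  forall i, i \in A -> F i = G i.
Proof.
move=> le hs i iA; apply/eqP; rewrite eqn_leq le //=; rewrite leqNgt; apply/negP=> lt.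
move: hs; rewrite (bigD1 i) //= [X in _ <= X](bigD1 i) //= => hs.
have : \sum_(j in A | j != i) F j <= \sum_(j in A | j != i) G j.
  by apply: leq_sum => j /andP [jA _]; apply: le.
lia.
Qed.

Lemma sum_set2 (x y : T) (F : T -> nat) : x != y ->
  \sum_(z in [set x; y]) F z = F x + F y.
Proof.
by move=> xy; rewrite big_setU1 ?big_set1 // inE.
Qed.

Lemma set2_inj (x y a b : T) : [set x; y] = [set a; b] -> x != y ->
  (x = a /\ y = b) \/ (x = b /\ y = a).
Proof.
move=> e xy.
have hx : x \in [set a; b] by rewrite -e !inE eqxx.
have hy : y \in [set a; b] by rewrite -e !inE eqxx orbT.
move: hx hy; rewrite !inE => /orP [] /eqP hx /orP [] /eqP hy.
- by move: xy; rewrite hx hy eqxx.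
- by left.
- by right.
- by move: xy; rewrite hx hy eqxx.
Qed.

Lemma meetP (E F : {set T}) : reflect (exists x, x \in E /\ x \in F) (meet E F).
Proof.
rewrite /meet; apply: (iffP (set0Pn _)) => [[x]|[x [h1 h2]]].
  by rewrite inE => /andP; exists x.
by exists x; rewrite inE h1 h2.
Qed.

End Gen.

Section G.
Variables (T : finType) (g : rel T) (gsym : symmetric g) (girr : irreflexive g).

Lemma edgesP H : reflect (exists x y, g x y /\ H = [set x; y]) (H \in edges g).
Proof.
rewrite inE; apply: (iffP existsP) => [[x /existsP [y /andP [gxy /eqP ->]]]|[x [y [gxy ->]]]].
  by exists x, y.
by exists x; apply/existsP; exists y; rewrite gxy eqxx.
Qed.

Lemma edge2 x y : g x y -> [set x; y] \in edges g.
Proof. by move=> h; apply/edgesP; exists x, y. Qed.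

Lemma gneq x y : g x y -> x != y.
Proof. by move=> h; apply/eqP => e; move: h; rewrite e girr. Qed.

Lemma deg_le w : deg g w <= maxdeg g.
Proof. exact: (leq_bigmax (F := deg g)). Qed.

End G.

Section G.
Variables (T : finType) (g : rel T) (gsym : symmetric g) (girr : irreflexive g).
Lemma card_cross (A B : {set T}) : (forall x, x \in A -> x \notin B) ->
  #|[set H in edges g | [exists a in A, exists b in B, H == [set a; b]]]|
  = \sum_(a in A) #|[set b in B | g a b]|.
Proof.
move=> dAB.
set P := [set p in setX A B | g p.1 p.2].
have -> : [set H in edges g | [exists a in A, exists b in B, H == [set a; b]]]
   = [set [set p.1; p.2] | p in P].
  apply/setP => H; rewrite inE; apply/andP/imsetP.
  - case=> /edgesP [x [y [gxy ->]]] /existsP [a /andP [aA /existsP [b /andP [bB /eqP e]]]].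
    exists (a, b); last by [].
    rewrite !inE aA bB /=.
    have [[ea eb]|[ea eb]] := set2_inj e (gneq girr gxy).
      by rewrite -ea -eb.
    by rewrite -ea -eb gsym.
  - case=> [[a b]]; rewrite !inE /= => /andP [/andP [aA bB] gab] ->.
    split; first by apply/existsP; exists a; apply/existsP; exists b; rewrite gab eqxx.
    by apply/existsP; exists a; rewrite aA; apply/existsP; exists b; rewrite bB eqxx.
rewrite card_in_imset.
  rewrite /P (@card_sumb _ (setX A B) (fun p => g p.1 p.2)).
  rewrite (_ : \sum_(a in A) #|[set b in B | g a b]| = \sum_(a in A) \sum_(b in B) g a b);
    last by apply: eq_bigr => a _; rewrite card_sumb.
  rewrite pair_big /=; apply: eq_bigl => -[a b]; rewrite !inE.
  by [].
move=> [a b] [a' b']; rewrite !inE /= => /andP [/andP [aA bB] gab] /andP [/andP [aA' bB'] _] e.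
have [[-> ->]|[ea eb]] := set2_inj e (gneq girr gab); first by [].
by move: (dAB _ aA); rewrite ea bB'.
Qed.
End G.

Section E.
Variables (T : finType) (g : rel T) (gsym : symmetric g) (girr : irreflexive g).
Variables (u v : T) (huv : g u v).
Let E := [set u; v].

Lemma unv : u != v. Proof. exact: gneq huv. Qed.

Lemma sumE (F : T -> nat) : \sum_(z in E) F z = F u + F v.
Proof. exact: sum_set2 unv. Qed.

Lemma deg_split y : deg g y = #|[set z in ~: E | g y z]| + g y u + g y v.
Proof.
rewrite /deg /nbhd.
have -> : [set x | g y x] = [set z in setT | g y z] by apply/setP=> z; rewrite !inE.
rewrite card_sumb (big_setID E) /= setTI setTD sumE card_sumb; lia.
Qed.

Lemma pairE x y : x \in E -> y \in E -> x != y -> [set x; y] = E.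
Proof.
rewrite /E !inE => /orP [] /eqP -> /orP [] /eqP -> //; rewrite ?eqxx // => _.
exact: setUC.
Qed.

Definition Rel (h f : {set T}) := [exists a in E, exists b in f, h == [set a; b]].

Lemma N1E : N1 g E = [set H in edges g | [exists a in E, exists b in ~: E, H == [set a; b]]].
Proof.
apply/setP => H; rewrite [in LHS]inE [in RHS]inE; apply/andP/andP; case=> He h2; split=> //.
- case/andP: h2 => hne /meetP [z [zE zH]].
  move/edgesP: He => [x [y [gxy eH]]].
  have xy := gneq girr gxy.
  move: zH; rewrite eH !inE => /orP [] /eqP ez; subst z.
  + apply/existsP; exists x; rewrite zE; apply/existsP; exists y.
    rewrite eqxx andbT inE; apply/negP => yE.
    by move: hne; rewrite eH (pairE zE yE xy) eqxx.
  + apply/existsP; exists y; rewrite zE; apply/existsP; exists x.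
    rewrite setUC eqxx andbT inE; apply/negP => xE.
    by move: hne; rewrite eH (pairE xE zE xy) eqxx.
- case/existsP: h2 => a /andP [aE /existsP [b /andP [bE /eqP eH]]].
  move: bE; rewrite inE => bE.
  apply/andP; split.
    apply/negP => /eqP e; move: bE; rewrite -e eH !inE eqxx orbT //.
  by apply/meetP; exists a; rewrite aE eH !inE eqxx.
Qed.

Lemma card_N1 : #|N1 g E| = #|[set b in ~:E | g u b]| + #|[set b in ~:E | g v b]|.
Proof.
rewrite N1E (card_cross gsym girr) ?sumE // => x xE; by rewrite inE xE.
Qed.

Lemma pairG (p q x y : T) : x \in [set p; q] -> y \in [set p; q] -> x != y -> [set x; y] = [set p; q].
Proof.
rewrite !inE => /orP [] /eqP -> /orP [] /eqP -> //; rewrite ?eqxx // => _.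
exact: setUC.
Qed.

Lemma N2P f : f \in N2 g E -> exists x y, [/\ g x y, x \notin E, y \notin E & f = [set x; y]].
Proof.
rewrite [f \in _]inE => /andP [fe /and3P [_ nm _]].
move/edgesP: fe => [x [y [gxy ef]]]; exists x, y; split=> //.
- apply/negP => xE; case/negP: nm; apply/meetP; exists x; by rewrite xE ef !inE eqxx.
- apply/negP => yE; case/negP: nm; apply/meetP; exists y; by rewrite yE ef !inE eqxx orbT.
Qed.

Lemma N2I x y w : g x y -> x \notin E -> y \notin E -> w \in E -> g w x -> [set x; y] \in N2 g E.
Proof.
move=> gxy xE yE wE gwx; rewrite [_ \in N2 g E]inE (edge2 gxy) /=.
apply/and3P; split.
- by apply/negP => /eqP e; move: xE; rewrite -e !inE eqxx.
- apply/negP => /meetP [z [zE]]; rewrite !inE => /orP [] /eqP ez; subst z.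
  + by rewrite zE in xE.
  + by rewrite zE in yE.
- apply/existsP; exists [set w; x]; rewrite (edge2 gwx) /=.
  apply/andP; split; apply/meetP.
  + by exists w; rewrite wE !inE eqxx.
  + by exists x; rewrite !inE eqxx orbT.
Qed.

Lemma Rel_N1 h f : h \in edges g -> f \in N2 g E -> Rel h f -> h \in N1 g E.
Proof.
move=> he fN /existsP [a /andP [aE /existsP [b /andP [bf /eqP eh]]]].
rewrite N1E [h \in _]inE he /=; apply/existsP; exists a; rewrite aE /=.
apply/existsP; exists b; rewrite eh eqxx andbT inE.
have [x [y [_ xE yE ef]]] := N2P fN.
by move: bf; rewrite ef in_set2 => /orP [] /eqP ->.
Qed.

Lemma Kset w x : w \in E -> x \notin E -> g w x ->
  [set f in N2 g E | Rel [set w; x] f] = [set [set x; z] | z in [set z in ~: E | g x z]].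
Proof.
move=> wE xE gwx; apply/setP => f; rewrite [in LHS]inE; apply/andP/imsetP.
- case=> fN /existsP [a /andP [aE /existsP [b /andP [bf /eqP eh]]]].
  have [[ea eb]|[ea eb]] := set2_inj eh (gneq girr gwx); last by move: xE; rewrite eb aE.
  subst a b.
  have [p [q [gpq pE qE ef]]] := N2P fN.
  move: bf; rewrite ef !inE => /orP [] /eqP ex; subst x.
  + by exists q; [rewrite inE in_setC qE gpq|].
  + by exists p; [rewrite inE in_setC pE gsym gpq|rewrite setUC].
- case=> z; rewrite inE in_setC => /andP [zE gxz] ->; split.
    exact: (N2I gxz xE zE wE gwx).
  apply/existsP; exists w; rewrite wE /=; apply/existsP; exists x.
  by rewrite in_set2 !eqxx.
Qed.

Lemma cardK w x : w \in E -> x \notin E -> g w x ->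
  #|[set f in N2 g E | Rel [set w; x] f]| = #|[set z in ~: E | g x z]|.
Proof.
move=> wE xE gwx; rewrite Kset // card_in_imset // => z z'.
rewrite !inE => /andP [_ gxz] _ e.
by have [[_ ->]|[_ ex]] := set2_inj e (gneq girr gxz); last by move: gxz; rewrite ex girr.
Qed.

Lemma cnt2 x y : x \notin E -> y \notin E -> x != y ->
  cnt g E [set x; y] = g u x + g u y + (g v x + g v y).
Proof.
move=> xE yE xy; rewrite /cnt (card_cross gsym girr); last first.
  by move=> z zE; rewrite !inE; apply/negP => /orP [] /eqP ez; subst z; [rewrite zE in xE|rewrite zE in yE].
by rewrite sumE !card_sumb !sum_set2.
Qed.

Lemma cnt_pos f : f \in N2 g E -> 0 < cnt g E f.
Proof.
move=> fN; have [x [y [_ xE yE ef]]] := N2P fN.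
move: fN; rewrite [f \in _]inE => /andP [_ /and3P [_ _ /existsP [H /andP [He /andP [m1 m2]]]]].
rewrite /cnt card_gt0; apply/set0Pn; exists H; rewrite [H \in _]inE He /=.
move/meetP: m1 => [z [zH zE]]; move/meetP: m2 => [z' [z'H z'f]].
have zz : z != z'.
  by apply/negP => /eqP e; subst z'; move: z'f; rewrite ef !inE => /orP [] /eqP e; subst z; [rewrite zE in xE|rewrite zE in yE].
move/edgesP: He => [p [q [_ eH]]].
apply/existsP; exists z; rewrite zE /=; apply/existsP; exists z'; rewrite z'f /=.
by rewrite eH (@pairG p q z z') // -eH.
Qed.
Lemma N1P h : h \in N1 g E -> exists a b, [/\ a \in E, b \notin E, g a b & h = [set a; b]].
Proof.
rewrite N1E [h \in _]inE => /andP [he /existsP [a /andP [aE /existsP [b /andP [bE /eqP eh]]]]].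
move: bE; rewrite in_setC => bE.
exists a, b; split=> //.
move/edgesP: he => [p [q [gpq ehpq]]].
have ab : a != b by apply/negP => /eqP e; subst b; rewrite aE in bE.
rewrite eh in ehpq.
by have [[-> ->]|[-> ->]] := set2_inj ehpq ab; rewrite // gsym.
Qed.

Lemma dbl : \sum_(f in N2 g E) cnt g E f = \sum_(h in N1 g E) #|[set f in N2 g E | Rel h f]|.
Proof.
transitivity (\sum_(h in edges g) #|[set f in N2 g E | Rel h f]|).
  by rewrite dcount.
rewrite (big_setID (N1 g E)) /=.
have -> : edges g :&: N1 g E = N1 g E.
  by apply/setIidPr/subsetP => h; rewrite [h \in N1 _ _]inE => /andP [].
rewrite [X in _ + X]big1 ?addn0 // => h /setDP [he hn].
apply/eqP; rewrite cards_eq0; apply/eqP/setP => f; rewrite [in LHS]inE in_set0.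
apply/negP => /andP [fN r].
by case/negP: hn; apply: (Rel_N1 he fN r).
Qed.

Lemma Kle h : h \in N1 g E -> #|[set f in N2 g E | Rel h f]| + 1 <= maxdeg g.
Proof.
move=> hN; have [a [b [aE bE gab eh]]] := N1P hN; subst h.
rewrite (cardK aE bE gab).
have := deg_le g b; rewrite (deg_split b).
have gba : g b a by rewrite gsym.
move: aE; rewrite in_set2 => /orP [] /eqP ea; subst a; rewrite gba /=; lia.
Qed.

Lemma FsetE : #|Fset g E| = #|N1 g E| + #|N2 g E :\: T6 g E|.
Proof.
rewrite /Fset cardsU.
have -> : N1 g E :&: (N2 g E :\: T6 g E) = set0.
  apply/setP => h; rewrite in_setI in_set0 in_setD.
  apply/negP => /and3P [h1 _ h2].
  move: h1; rewrite [h \in N1 g E]inE => /andP [_ /andP [_ m1]].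
  by move: h2; rewrite [h \in N2 g E]inE => /andP [_ /and3P [_ m2 _]]; rewrite m1 in m2.
by rewrite cards0 subn0.
Qed.

Lemma sumT6 : \sum_(f in N2 g E) (f \notin T6 g E) = #|N2 g E :\: T6 g E|.
Proof.
rewrite -card_sumb; apply: eq_card => f.
by rewrite in_setD [in LHS]inE andbC.
Qed.

Lemma lowb : #|N2 g E| + #|N2 g E :\: T6 g E| <= \sum_(f in N2 g E) cnt g E f.
Proof.
rewrite -sumT6 -sum1_card -big_split /=; apply: leq_sum => f fN.
have := cnt_pos fN.
have : f \notin T6 g E -> cnt g E f != 1 by rewrite [f \in T6 g E]inE fN /=.
case: (f \in T6 g E) => /=; last move=> /(_ isT); lia.
Qed.

Lemma uE : u \in E. Proof. by rewrite in_set2 eqxx. Qed.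
Lemma vE : v \in E. Proof. by rewrite in_set2 eqxx orbT. Qed.

Lemma fwd : #|Fset g E| = (maxdeg g)^2 - 1 ->
  [/\ deg g u = maxdeg g,
      forall x, g u x -> x != v -> ~~ g x v /\ deg g x = maxdeg g &
      forall x y, g u x -> x != v -> g x y -> y \notin E -> g u y || g v y].
Proof.
move=> hF.
set D := maxdeg g.
have du : deg g u <= D by apply: deg_le.
have dv : deg g v <= D by apply: deg_le.
have su := deg_split u; rewrite (girr u) huv /= in su.
have gvu : g v u by rewrite gsym.
have sv := deg_split v; rewrite (girr v) gvu /= in sv.
have hn1 := card_N1.
rewrite FsetE in hF.
have hmn : #|N2 g E :\: T6 g E| <= #|N2 g E| by apply: subset_leq_card; apply: subsetDl.
have hlow := lowb.
have hup : \sum_(h in N1 g E) #|[set f in N2 g E | Rel h f]| <= \sum_(h in N1 g E) D.-1.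
  by apply: leq_sum => h hN; have := Kle hN; rewrite -/D; lia.
rewrite sum_nat_const -dbl in hup.
set n1 := #|N1 g E| in hn1 hF hup.
set m := #|N2 g E :\: T6 g E| in hF hmn hlow.
set n2 := #|N2 g E| in hmn hlow.
set S := \sum_(f in N2 g E) cnt g E f in hlow hup.
set au := #|[set z in ~: E | g u z]| in su hn1.
set av := #|[set z in ~: E | g v z]| in sv hn1.
have [d hd] : exists d, D = d.+1 by exists D.-1; lia.
rewrite hd /= in hup; rewrite hd in hF du dv.
have h1d : n1 * d <= (2 * d) * d by apply: leq_mul => //; lia.
have e1 : n1 = 2 * d /\ m = d * d by nia.
case: e1 => e1 e2.
rewrite e1 in hup.
have e3 : n2 = d * d by nia.
have hK : forall h, h \in N1 g E -> #|[set f in N2 g E | Rel h f]| = d.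
  apply: (sum_eq_le (G := fun _ => d)).
    by move=> h hN; have := Kle hN; rewrite -/D hd; lia.
  by rewrite sum_nat_const -dbl -/S -/n1 e1; lia.
have hC : forall f, f \in N2 g E -> 1 + (f \notin T6 g E) = cnt g E f.
  apply: sum_eq_le.
    move=> f fN; have := cnt_pos fN.
    have : f \notin T6 g E -> cnt g E f != 1 by rewrite [f \in T6 g E]inE fN /=.
    case: (f \in T6 g E) => /=; last move=> /(_ isT); lia.
  rewrite big_split /= sum1_card sumT6 -/S -/n2 -/m; lia.
have hT : forall f, f \in N2 g E -> f \notin T6 g E.
  move=> f fN; apply/negP => fT.
  have := cardsID (T6 g E) (N2 g E); rewrite -/m -/n2 => hh.
  have : #|N2 g E :&: T6 g E| = 0 by lia.
  by move/cards0_eq/setP/(_ f); rewrite in_setI fN fT in_set0.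
have hC2 : forall f, f \in N2 g E -> cnt g E f = 2.
  by move=> f fN; rewrite -hC // hT.
have hx : forall x, g u x -> x != v -> x \notin E /\ ~~ g x v /\ deg g x = D.
  move=> x gux xv.
  have xE : x \notin E.
    by rewrite in_set2 negb_or xv andbT; apply/negP => /eqP ex; move: gux; rewrite ex girr.
  have hN : [set u; x] \in N1 g E.
    rewrite N1E [_ \in _]inE (edge2 gux) /=; apply/existsP; exists u; rewrite uE /=.
    by apply/existsP; exists x; rewrite in_setC xE eqxx.
  have := hK _ hN; rewrite (cardK uE xE gux) => hk.
  have := deg_split x; rewrite hk.
  have gxu : g x u by rewrite gsym.
  have := deg_le g x; rewrite -/D hd gxu /=.
  case: (g x v) => /=; lia.
split.
- rewrite su; lia.
- by move=> x gux xv; have [_ ?] := hx x gux xv.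
- move=> x y gux xv gxy yE.
  have [xE [nxv _]] := hx x gux xv.
  have fN := N2I gxy xE yE uE gux.
  have := hC2 _ fN; rewrite (cnt2 xE yE (gneq girr gxy)) gux.
  have gvx : g v x = false by rewrite gsym; apply/negbTE.
  rewrite gvx /=.
  case: (g u y); case: (g v y) => //=.
Qed.

Lemma bwd : regular g (maxdeg g) -> 0 < maxdeg g ->
  (forall y, g u y || g v y) -> (forall y, ~~ (g u y && g v y)) ->
  #|Fset g E| = (maxdeg g)^2 - 1.
Proof.
move=> reg Dpos h1 h2.
set D := maxdeg g.
have [d hd] : exists d, D = d.+1 by exists D.-1; lia.
have hy : forall y, #|[set z in ~: E | g y z]| = d.
  move=> y; have := deg_split y; rewrite reg -/D hd.
  have := h1 y; have := h2 y; rewrite (gsym u y) (gsym v y).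
  by case: (g y u); case: (g y v) => //=; lia.
have hn1 : #|N1 g E| = 2 * d by rewrite card_N1 !hy; lia.
have hK : forall h, h \in N1 g E -> #|[set f in N2 g E | Rel h f]| = d.
  by move=> h hN; have [a [b [aE bE gab eh]]] := N1P hN; subst h; rewrite (cardK aE bE gab) hy.
have hC2 : forall f, f \in N2 g E -> cnt g E f = 2.
  move=> f fN; have [x [y [gxy xE yE ef]]] := N2P fN; subst f.
  rewrite (cnt2 xE yE (gneq girr gxy)).
  have := h1 x; have := h2 x; have := h1 y; have := h2 y.
  by case: (g u x); case: (g v x); case: (g u y); case: (g v y).
have hm : #|N2 g E :\: T6 g E| = #|N2 g E|.
  apply: eq_card => f; rewrite in_setD.
  case fN: (f \in N2 g E); last by rewrite andbF.
  by rewrite [f \in T6 g E]inE fN hC2.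
have hs := dbl.
rewrite (eq_bigr (fun _ => 2)) // in hs.
rewrite [in RHS](eq_bigr (fun _ => d)) // in hs.
rewrite !sum_nat_const hn1 in hs.
rewrite FsetE hm hn1 hd.
nia.
Qed.
End E.
Unset Implicit Arguments. Set Strict Implicit.

Theorem lemma3 (T : finType) (g : rel T) (gsym : symmetric g)
  (girr : irreflexive g) (gconn : forall x y : T, connect g x y) :
  (exists2 E, E \in edges g & #|Fset g E| = (maxdeg g) ^ 2 - 1) <->
  in_Gp g (maxdeg g).
Proof.
split.
- case=> E /edgesP [u [v [huv ->]]] hF.
  have [du hx hc] := fwd gsym girr huv hF.
  have gvu : g v u by rewrite gsym.
  have hF' : #|Fset g [set v; u]| = (maxdeg g) ^ 2 - 1 by rewrite setUC.
  have [dv hx' hc'] := fwd gsym girr gvu hF'.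
  have cl : forall a b, g a b -> a \in nbhd g u :|: nbhd g v -> b \in nbhd g u :|: nbhd g v.
    move=> a b gab; rewrite !inE => /orP [] ga.
    + case: (eqVneq a v) => [ea|av].
        by subst a; rewrite gab orbT.
      case bE: (b \in [set u; v]).
        by move: bE; rewrite in_set2 => /orP [] /eqP ->; rewrite ?gvu ?huv ?orbT.
      by apply: (hc a b ga av gab); rewrite bE.
    + case: (eqVneq a u) => [ea|au].
        by subst a; rewrite gab.
      case bE: (b \in [set v; u]).
        by move: bE; rewrite in_set2 => /orP [] /eqP ->; rewrite ?gvu ?huv ?orbT.
      by rewrite orbC; apply: (hc' a b ga au gab); rewrite bE.
  have S : forall y, y \in nbhd g u :|: nbhd g v.
    move=> y.
    have clo : closed g (mem (nbhd g u :|: nbhd g v)).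
      move=> a b gab; apply/idP/idP; first exact: cl.
      by apply: cl; rewrite gsym.
    rewrite -(closed_connect clo (gconn u y)).
    by rewrite !inE gvu orbT.
  have I0 : nbhd g u :&: nbhd g v = set0.
    apply/setP => w; rewrite in_setI in_set0 !inE.
    apply/negP => /andP [guw gvw].
    case: (eqVneq w v) => [ew|wv].
      by subst w; rewrite girr in gvw.
    have [nw _] := hx w guw wv.
    by move: nw; rewrite gsym gvw.
  split.
  + rewrite -du; apply/card_gt0P; exists v; by rewrite inE.
  + move=> w; have := S w; rewrite in_setU !inE => /orP [] gw.
      case: (eqVneq w v) => [->|wv]; first by [].
      by have [_ ->] := hx w gw wv.
    case: (eqVneq w u) => [->|wu]; first by [].
    by have [_ ->] := hx' w gw wu.
  + have e : [set: T] = nbhd g u :|: nbhd g v by apply/setP => y; rewrite in_setT S.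
    rewrite -cardsT e cardsU I0 cards0 subn0.
    by move: du dv; rewrite /deg => -> ->; lia.
  + by exists u, v; split => //; apply/setP => y; rewrite in_setT S.
- case=> Dpos reg hT [u [v [huv hU]]].
  exists [set u; v]; first exact: edge2 huv.
  have h1 : forall y, g u y || g v y.
    by move=> y; have := in_setT y; rewrite -hU !inE.
  apply: (bwd gsym girr huv reg Dpos h1) => y.
  have := cardsU (nbhd g u) (nbhd g v); rewrite hU cardsT hT.
  move: (reg u) (reg v); rewrite /deg => -> -> hc.
  have : #|nbhd g u :&: nbhd g v| = 0 by lia.
  move/cards0_eq/setP/(_ y); rewrite in_setI in_set0 !inE => ->.
  by [].
Qed.
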